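(* Let $\mathcal{H}=(Q_0,Q_1,\beta)$ be a directed tensor-labeled hypergraph over $\mathbb{R}$. Then the edge Gram operator $L_\beta=\partial_\beta^*\partial_\beta$ on $\mathbb{R}^{Q_1}$ satisfies $$\mathrm{rank}(L_\beta)=|Q_1|-\dim_{\mathbb{R}}\mathcal{Z}(\mathcal{H})=|V_{\mathrm{macro}}|-c_{\mathrm{macro}}-\delta(\mathcal{H}),$$ and this number equals the sum of the multiplicities of the nonzero eigenvalues of $L_\beta$.
   Context: $T(\mathbb{R}^{Q_0})=\bigoplus_{k\ge0}(\mathbb{R}^{Q_0})^{\otimes k}$, equipped with the inner product making the standard basis ($1$ and all $u_1\otimes\cdots\otimes u_k$, $u_i\in Q_0$, identifying $v$ with $\mathbf{1}_v$) orthonormal; $\mathbb{R}^{Q_1}$ has the standard inner product. A directed tensor-labeled hypergraph is $\mathcal{H}=(Q_0,Q_1,\beta)$ ($Q_0,Q_1$ finite) with $\beta:\mathbb{R}^{Q_1}\to T\times T$ linear, $\beta(\mathbf{1}_e)=(A_e,B_e)$. $\partial_\beta:\mathbb{R}^{Q_1}\to T(\mathbb{R}^{Q_0})$, $\mathbf{1}_e\mapsto B_e-A_e$; $\partial_\beta^*$ its adjoint; $\mathcal{Z}(\mathcal{H})=\mathrm{Ker}\,\partial_\beta$. $V_{\mathrm{macro}}=\{A_e\}\cup\{B_e\}$; the macrograph is the directed multigraph on $V_{\mathrm{macro}}$ with edges $Q_1$, $e:A_e\to B_e$; $c_{\mathrm{macro}}$ its number of weakly connected components; $B_{\mathrm{macro}}:\mathbf{1}_e\mapsto\mathbf{1}_{B_e}-\mathbf{1}_{A_e}$;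 $\hat\phi:\mathbb{R}^{V_{\mathrm{macro}}}\to T(\mathbb{R}^{Q_0})$, $\mathbf{1}_w\mapsto w$; $\delta(\mathcal{H})=\dim_{\mathbb{R}}(\mathrm{Im}B_{\mathrm{macro}}\cap\mathrm{Ker}\hat\phi)$. *)

(* Defs.v *)
From HB Require Import structures.
From mathcomp Require Import all_boot all_order all_algebra.
From mathcomp Require Import finmap.
From mathcomp Require Import reals.
Set Implicit Arguments. Unset Strict Implicit. Unset Printing Implicit Defensive.
Import Order.TTheory GRing.Theory Num.Theory.
Local Open Scope ring_scope.
Local Open Scope fset_scope.

Section Hypergraph.
Variables (R : realType) (Q0 Q1 : finType).

(* The tensor algebra T(R^{Q0}) = (+)_k (R^{Q0})^{(x)k}: an element is a finitely
   supported family of real coefficients indexed by words over Q0; the word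
   [:: u1; ..; uk] stands for the basis tensor u1 (x) ... (x) uk (the empty word
   for 1).  The inner product makes these basis tensors orthonormal. *)
Definition tensor := {fsfun seq Q0 -> R with 0}.

(* beta : R^{Q1} -> T x T is linear, hence determined by beta(1_e) = (A_e, B_e). *)
Variable beta : Q1 -> tensor * tensor.
Definition Aof (e : Q1) : tensor := (beta e).1.
Definition Bof (e : Q1) : tensor := (beta e).2.

(* a finite set of words containing the supports of all A_e, B_e; the image of
   every linear map below lies in the span of these basis words *)
Definition words : {fset seq Q0} :=
  \big[@fsetU _/fset0]_(e : Q1) (finsupp (Aof e) `|` finsupp (Bof e)).

Definition mx_of (I J : finType) (f : I -> J -> R) : 'M[R]_(#|I|, #|J|) :=
  \matrix_(i, j) f (enum_val i) (enum_val j).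

(* matrix of the boundary map d_beta : 1_e |-> B_e - A_e (row convention:
   x |-> x *m dmx), coordinates in the orthonormal basis of words *)
Definition dmx : 'M[R]_(#|Q1|, #|{: words}|) :=
  mx_of (fun (e : Q1) (w : words) => Bof e (val w) - Aof e (val w)).

Definition Lbeta : 'M[R]_#|Q1| := dmx *m dmx^T.

Definition dimZ : nat := \rank (kermx dmx).

Definition Vmacro : {fset tensor} :=
  [fset Aof e | e : Q1] `|` [fset Bof e | e : Q1].

Definition macro_adj : rel Vmacro := fun x y =>
  [exists e : Q1, ((Aof e == val x) && (Bof e == val y))
                  || ((Bof e == val x) && (Aof e == val y))].

Definition c_macro : nat := n_comp macro_adj predT.

Definition ind (v : tensor) (x : Vmacro) : R := (val x == v)%:R.

Definition Bmacro : 'M[R]_(#|Q1|, #|{: Vmacro}|) :=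
  mx_of (fun (e : Q1) (x : Vmacro) => ind (Bof e) x - ind (Aof e) x).

Definition phihat : 'M[R]_(#|{: Vmacro}|, #|{: words}|) :=
  mx_of (fun (x : Vmacro) (w : words) => (val x : tensor) (val w)).

Definition delta : nat := \rank (Bmacro :&: kermx phihat)%MS.

End Hypergraph.

(* Main.v *)
Require Import Defs.
From HB Require Import structures.
From mathcomp Require Import all_boot all_order all_algebra.
From mathcomp Require Import finmap.
From mathcomp Require Import reals.
From mathcomp Require Import complex.
From mathcomp Require Import zify.
Set Implicit Arguments. Unset Strict Implicit. Unset Printing Implicit Defensive.
Import Order.TTheory GRing.Theory Num.Theory.
Local Open Scope ring_scope.

Section PartA.

Lemma gram_zero (R : realFieldType) m k (M : 'M[R]_(m,k)) : M *m M^T = 0 -> M = 0.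
Proof.
move=> H; apply/matrixP => i j; rewrite mxE.
have /matrixP /(_ i i) := H; rewrite !mxE => /eqP.
rewrite psumr_eq0; last by move=> l _; rewrite mxE -expr2 sqr_ge0.
move=> /allP /(_ j (mem_index_enum _)) /=; rewrite mxE -expr2 sqrf_eq0 => /eqP.
done.
Qed.

Lemma gram_rank (R : realFieldType) m k (D : 'M[R]_(m,k)) : \rank (D *m D^T) = \rank D.
Proof.
apply/eqP; rewrite eqn_leq mxrankM_maxl /=.
have sub : (kermx (D *m D^T) <= kermx D)%MS.
  apply/sub_kermxP; apply: gram_zero.
  by rewrite trmx_mul mulmxA -(mulmxA _ D) mulmx_ker mul0mx.
have := mxrank_leqif_sup sub; rewrite !mxrank_ker => /leqifP.
have := rank_leq_row D; have := rank_leq_row (D *m D^T).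
case: ifP => _; lia.
Qed.

End PartA.

Section PartI.

Lemma sum_ev (R : nzRingType) (V : finType) (v : V) (g : V -> R) :
  \sum_(k < #|V|) (enum_val k == v)%:R * g (enum_val k) = g v.
Proof.
rewrite -(big_enum_val (A := V) (fun x => (x == v)%:R * g x)) /=.
rewrite (bigD1 v) //= eqxx mul1r big1 ?addr0 // => x.
by case: eqP => // _; rewrite ?andbF ?mul0r.
Qed.

Lemma incidence_rank (R : fieldType) (V E : finType) (a b : E -> V)
  (adj : rel V) (B : 'M[R]_(#|E|, #|V|)) :
  (forall x y, adj x y = [exists e, ((a e == x) && (b e == y)) || ((b e == x) && (a e == y))]) ->
  (forall i j, B i j = (enum_val j == b (enum_val i))%:R - (enum_val j == a (enum_val i))%:R) ->
  \rank B = (#|V| - n_comp adj predT)%N.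
Proof.
move=> hadj hB.
have symadj : connect_sym adj.
  apply: sym_connect_sym. move=> x y. rewrite !hadj.
  by apply/existsP/existsP => -[e He]; exists e; case/orP: He => /andP[-> ->]; rewrite ?orbT.
pose S : finType := {x : V | roots adj x}.
have cardS : #|S| = n_comp adj predT.
  by rewrite card_sig; apply: eq_card => x; rewrite !inE andbT.
pose Cm : 'M[R]_(#|S|, #|V|) :=
  \matrix_(r, j) (fingraph.root adj (enum_val j) == val (enum_val r))%:R.
have Bv : forall (y : 'rV[R]_#|V|) e,
   (y *m B^T) 0 (enum_rank e) = y 0 (enum_rank (b e)) - y 0 (enum_rank (a e)).
  move=> y e; rewrite mxE.
  transitivity (\sum_(k < #|V|) ((enum_val k == b e)%:R * y 0 (enum_rank (enum_val k))
       - (enum_val k == a e)%:R * y 0 (enum_rank (enum_val k)))).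
    by apply: eq_bigr => k _; rewrite mxE hB enum_rankK enum_valK mulrC mulrBl.
  by rewrite sumrB !(sum_ev _ (fun x => y 0 (enum_rank x))).
have rootE : forall e, fingraph.root adj (a e) = fingraph.root adj (b e).
  move=> e; apply/fingraph.rootP => //; apply: connect1; rewrite hadj.
  by apply/existsP; exists e; rewrite !eqxx.
have sub1 : (Cm <= kermx B^T)%MS.
  apply/sub_kermxP/matrixP => r i; rewrite [RHS]mxE.
  have := Bv (row r Cm) (enum_val i); rewrite -row_mul mxE enum_valK => ->.
  by rewrite !mxE !enum_rankK rootE subrr.
have sub2 : (kermx B^T <= Cm)%MS.
  apply/row_subP => i; set y := row i _.
  have y0 : y *m B^T = 0 by rewrite /y -row_mul mulmx_ker row0.
  pose yv (x : V) := y 0 (enum_rank x).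
  have yroot : forall x, yv (fingraph.root adj x) = yv x.
    move=> x; apply/eqP.
    have cl : closed adj [pred z | yv z == yv x].
      move=> z w; rewrite hadj => /existsP[e He].
      have := Bv y e; rewrite y0 mxE => /eqP; rewrite eq_sym subr_eq0 => /eqP He'.
      by case/orP: He => /andP[/eqP <- /eqP <-]; rewrite !inE /yv He'.
    have := closed_connect cl (fingraph.connect_root _ x).
    by rewrite !inE /= eqxx => <-.
  apply/submxP; exists (\row_r yv (val (enum_val r))).
  apply/rowP => j; rewrite [RHS]mxE; symmetry.
  have rS : roots adj (fingraph.root adj (enum_val j)) by apply: roots_root.
  pose v : S := exist (fun x => roots adj x) _ rS.
  transitivity (\sum_(k < #|S|) (enum_val k == v)%:R * yv (val (enum_val k))).
    apply: eq_bigr => k _; rewrite !mxE mulrC; congr (_%:R * _).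
    by rewrite eq_sym -val_eqE.
  by rewrite (sum_ev _ (fun x : S => yv (val x))) /= yroot /yv enum_valK.
have rkC : \rank Cm = #|S|.
  apply/eqP; rewrite eqn_leq rank_leq_row /=.
  pose P : 'M[R]_(#|V|, #|S|) := \matrix_(j, s) (enum_val j == val (enum_val s))%:R.
  have CP : Cm *m P = 1%:M.
    apply/matrixP => r s; rewrite !mxE.
    transitivity (\sum_(k < #|V|) (enum_val k == val (enum_val s))%:R *
                   (fingraph.root adj (enum_val k) == val (enum_val r))%:R :> R).
      by apply: eq_bigr => k _; rewrite !mxE mulrC.
    rewrite (sum_ev _ (fun x => (fingraph.root adj x == val (enum_val r))%:R)).
    have -> : fingraph.root adj (val (enum_val s)) = val (enum_val s) by apply/eqP; case: (enum_val s).
    by rewrite val_eqE (inj_eq enum_val_inj) eq_sym.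
  by rewrite -{1}(mxrank1 R #|S|) -CP mxrankM_maxl.
have : \rank Cm = \rank (kermx B^T) by apply/eqmx_rank; rewrite sub1 sub2.
rewrite rkC mxrank_ker mxrank_tr cardS => ->.
have := rank_leq_col B; lia.
Qed.

Lemma sum_ev_fset (R : nzRingType) (T : choiceType) (A : {fset T}) (v : A) (g : A -> R) :
  \sum_(k < #|{: A}|) (enum_val k == v)%:R * g (enum_val k) = g v.
Proof. exact: sum_ev. Qed.

Lemma n_comp_le (T : finType) (e : rel T) : (n_comp e predT <= #|T|)%N.
Proof. exact: max_card. Qed.

End PartI.

Section PartSp.
Local Open Scope complex_scope.

Lemma char_poly_simil (F : fieldType) n (P A : 'M[F]_n) :
  P \in unitmx -> char_poly (invmx P *m A *m P) = char_poly A.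
Proof.
move=> Pu; rewrite /char_poly /char_poly_mx.
set Q := map_mx polyC P; set Qi := map_mx polyC (invmx P).
have QiQ : Qi *m Q = 1%:M by rewrite -map_mxM mulVmx // map_mx1.
have -> : 'X%:M - map_mx polyC (invmx P *m A *m P) = Qi *m ('X%:M - map_mx polyC A) *m Q.
  rewrite !map_mxM -/Q -/Qi mulmxBr mulmxBl; congr (_ - _).
  by rewrite scalar_mxC -mulmxA QiQ mulmx1.
rewrite (det_mulmx (Qi *m _) Q) (det_mulmx Qi) mulrC mulrA -det_mulmx.
by rewrite (mulmx1C QiQ) det1 mul1r.
Qed.

Lemma rank_diag (F : fieldType) n (d : 'rV[F]_n) :
  \rank (diag_mx d) = (\sum_(i < n) (d ord0 i != 0%R))%N.
Proof.
elim: n d => [|n IH] d; first by rewrite big_ord0 thinmx0 mxrank0.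
rewrite big_ord_recl.
set d1 := \row_(j < 1) d 0 ord0; set d2 := \row_(j < n) d 0 (lift ord0 j).
have Ed : d = row_mx (\row_(j < 1) d 0 ord0) (\row_(j < n) d 0 (lift ord0 j)) :> 'rV_(1 + n).
  apply/rowP => j; rewrite mxE; case: splitP => k hk; rewrite mxE;
    congr (d _ _); apply: val_inj => /=; rewrite hk //.
  by rewrite (ord1 k).
transitivity (\rank (diag_mx (row_mx d1 d2))); first by rewrite -Ed.
rewrite diag_mx_row rank_diag_block_mx IH; congr (_ + _)%N.
  have -> : diag_mx d1 = (d ord0 ord0)%:M.
    by apply/matrixP => i j; rewrite !mxE (ord1 i) (ord1 j) eqxx.
  rewrite rank_rV; congr (nat_of_bool (~~ _)).
  apply/eqP/eqP => [/matrixP/(_ ord0 ord0)|->]; rewrite ?mxE ?eqxx ?mulr1n //.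
  by apply/matrixP => i j; rewrite !mxE mul0rn.
by apply: eq_bigr => i _; rewrite mxE.
Qed.

Lemma spec_sym (R : realType) n (L : 'M[R]_n) : L^T = L ->
  exists es : seq R, char_poly L = \prod_(x <- es) ('X - x%:P) /\
     count (fun x => x != 0) es = \rank L.
Proof.
move=> symL.
pose Lc := map_mx (real_complex R) L.
have herm : Lc \is hermsymmx.
  apply: realsym_hermsym.
    apply/is_hermitianmxP; rewrite expr0 scale1r map_mx_id // /Lc map_trmx symL //.
  by apply/mxOverP => i j; rewrite mxE complex_real.
have /orthomx_spectralP E := hermitian_normalmx herm.
have dreal := hermitian_spectral_diag_real herm.
move: E dreal; set d := spectral_diag Lc; set P := spectralmx Lc => E dreal.
have Pu : P \in unitmx := spectral_unit Lc.
have dR : forall i, real_complex R (complex.Re (d 0 i)) = d 0 i.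
  by move=> i; apply: RRe_real; exact: (mxOverP dreal 0 i).
exists [seq complex.Re (d 0 i) | i <- enum 'I_n]; split.
  apply: (@map_poly_inj _ _ (real_complex R)).
  rewrite map_char_poly -/Lc E char_poly_simil // char_poly_trig ?diag_mx_is_trig //.
  rewrite rmorph_prod big_map big_enum /=; apply: eq_bigr => i _.
  rewrite map_polyXsubC; congr ('X - _%:P); rewrite mxE eqxx mulr1n.
  exact/esym/dR.
have rk : \rank Lc = \rank L by exact: mxrank_map.
rewrite -rk E mxrankMfree ?row_free_unit //.
rewrite (eqmxMfull _ (_ : row_full (invmx P))); last by rewrite row_full_unit unitmx_inv.
rewrite rank_diag.
rewrite count_map -sum1_count big_mkcond /= big_enum /=.
apply: eq_bigr => i _ /=; rewrite -[d ord0 i](dR i) fmorph_eq0.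
by case: (_ != 0).
Qed.

Lemma sum_count_undup (T : eqType) (t : seq T) :
  (\sum_(a <- undup t) count_mem a t)%N = size t.
Proof.
rewrite -(perm_size (perm_count_undup t)) size_flatten /shape -map_comp sumnE big_map.
by apply: eq_bigr => a _ /=; rewrite size_nseq.
Qed.

Lemma part3_gen (R : realType) n (L : 'M[R]_n) : L^T = L ->
  exists s : seq R,
        [/\ uniq s,
            (forall a : R, a \in s <-> (a != 0 /\ eigenvalue L a))
          & (\sum_(a <- s) mup a (char_poly L))%N = \rank L].
Proof.
move=> /spec_sym [es [Ech Ecount]].
exists (undup [seq x <- es | x != 0]); split.
- exact: undup_uniq.
- move=> a; rewrite mem_undup mem_filter eigenvalue_root_char Ech root_prod_XsubC.
  by split => [/andP[-> ->]|[-> ->]].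
- rewrite -Ecount -size_filter -sum_count_undup.
  apply: eq_big_seq => a; rewrite mem_undup mem_filter => /andP[a0 _].
  rewrite Ech mu_prod_XsubC count_filter; apply: eq_count => x /=.
  by case: eqVneq => // ->; rewrite a0.
Qed.

End PartSp.

Section PartM.
Local Open Scope fset_scope.


Variables (R : realType) (Q0 Q1 : finType) (beta : Q1 -> tensor R Q0 * tensor R Q0).

Lemma inA e : Aof beta e \in Vmacro beta.
Proof. by rewrite /Vmacro in_fsetU; apply/orP; left; apply/imfsetP; exists e. Qed.
Lemma inB e : Bof beta e \in Vmacro beta.
Proof. by rewrite /Vmacro in_fsetU; apply/orP; right; apply/imfsetP; exists e. Qed.

Lemma rank_Bmacro : \rank (Bmacro beta) = (#|{: Vmacro beta}| - c_macro beta)%N.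
Proof.
apply: (@incidence_rank _ _ _ (fun e => [` inA e]) (fun e => [` inB e])).
  move=> x y; rewrite /macro_adj; apply: eq_existsb => e.
  by rewrite -!val_eqE.
by move=> i j; rewrite /Bmacro /mx_of mxE /ind -!val_eqE.
Qed.

Lemma dmx_factor : dmx beta = Bmacro beta *m phihat beta.
Proof.
apply/matrixP => i j; rewrite [RHS]mxE /dmx /mx_of mxE.
pose g (x : Vmacro beta) : R := (val x : tensor R Q0) (val (enum_val j)).
have -> : Bof beta (enum_val i) (val (enum_val j)) = g [` inB (enum_val i)] by [].
have -> : Aof beta (enum_val i) (val (enum_val j)) = g [` inA (enum_val i)] by [].
rewrite -(sum_ev_fset [` inB (enum_val i)] g) -(sum_ev_fset [` inA (enum_val i)] g) -sumrB.
apply: eq_bigr => k _.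
have eB : (enum_val k == [` inB (enum_val i)]) = (val (enum_val k) == Bof beta (enum_val i)).
  by symmetry; exact: (@val_eqE _ _ _ (enum_val k) [` inB (enum_val i)]).
have eA : (enum_val k == [` inA (enum_val i)]) = (val (enum_val k) == Aof beta (enum_val i)).
  by symmetry; exact: (@val_eqE _ _ _ (enum_val k) [` inA (enum_val i)]).
rewrite eA eB /Bmacro /phihat /mx_of !mxE /ind mulrBl.
by [].
Qed.

Lemma hK'L : (\rank (dmx beta) + delta beta)%N = \rank (Bmacro beta).
Proof.
have hK := mxrank_mul_ker (Bmacro beta) (phihat beta).
by rewrite dmx_factor /delta; exact hK.
Qed.
Lemma rLL : \rank (Lbeta beta) = \rank (dmx beta).
Proof. exact: gram_rank. Qed.
Lemma hZL : dimZ beta = (#|Q1| - \rank (dmx beta))%N.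
Proof. by rewrite /dimZ mxrank_ker. Qed.
Lemma hcL : (c_macro beta <= #|{: Vmacro beta}|)%N.
Proof. exact: n_comp_le. Qed.
Lemma hK2 : (\rank (dmx beta) + delta beta)%N = (#|{: Vmacro beta}| - c_macro beta)%N.
Proof. by rewrite -rank_Bmacro hK'L. Qed.

Lemma part12 :
  (\rank (Lbeta beta))%:Z = (#|Q1|%:Z - (dimZ beta)%:Z) /\
  (\rank (Lbeta beta))%:Z =
        (#|{: Vmacro beta}|%:Z - (c_macro beta)%:Z - (delta beta)%:Z).
Proof.
rewrite rLL hZL; split; first by rewrite (subzn (leq_subr _ _)) subKn // rank_leq_row.
by rewrite (subzn hcL) -hK2 PoszD addrK.
Qed.


End PartM.

Theorem theorem6p5 (R : realType) (Q0 Q1 : finType)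
    (beta : Q1 -> tensor R Q0 * tensor R Q0) :
  [/\ (\rank (Lbeta beta))%:Z = (#|Q1|%:Z - (dimZ beta)%:Z),
      (\rank (Lbeta beta))%:Z =
        (#|{: Vmacro beta}|%:Z - (c_macro beta)%:Z - (delta beta)%:Z)
    & exists s : seq R,
        [/\ uniq s,
            (forall a : R, a \in s <-> (a != 0 /\ eigenvalue (Lbeta beta) a))
          & (\sum_(a <- s) mup a (char_poly (Lbeta beta)))%N = \rank (Lbeta beta)]].
Proof.
have [h1 h2] := part12 beta.
split => //.
by apply: part3_gen; rewrite /Lbeta trmx_mul trmxK.
Qed.
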